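(* Let $d,q\geq 2$ be integers with $d\mid q$. Then for every $x\in\mathbb{Z}$, the natural density of $\{n\in\mathbb{N}: u_q(n)+x\equiv 0\pmod d\}$ exists and equals $$\frac{1}{d^2}\sum_{f\mid\gcd(x,d)}f\cdot\varphi\!\left(\frac{d}{f}\right),$$ where the sum runs over positive divisors $f$ of $\gcd(x,d)$ and $\varphi$ is Euler's totient function.
   Context: For an integer $q\geq 2$ and $n\in\mathbb{N}$: $v_q(0)=0$ and, for $n>0$, $v_q(n)=\max\{k: q^k\mid n\}$; $w_q(n)=\sum_{i=0}^n v_q(i)$; $u_q(n)=\sum_{i=0}^n w_q(i)$. The natural density of $T\subseteq\mathbb{N}$ is $\lim_{N\to\infty}|\{n\in T: 0\leq n<N\}|/N$. *)

(* Defs.v *)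
From HB Require Import structures.
From mathcomp Require Import all_boot all_order all_algebra.
From mathcomp Require Import all_classical all_reals all_analysis.
Set Implicit Arguments. Unset Strict Implicit. Unset Printing Implicit Defensive.
Import Order.TTheory GRing.Theory Num.Theory.
Import numFieldNormedType.Exports.
Local Open Scope classical_set_scope.
Local Open Scope ring_scope.

(* v_q(0) = 0; for n > 0, v_q(n) = max { k : q^k | n }.
   For q >= 2 and n > 0 any such k satisfies k <= n, so the max over k < n.+1
   is the max over all k. *)
Definition vq (q n : nat) : nat :=
  (if n == 0 then 0 else \max_(k < n.+1 | q ^ k %| n) k)%N.

Definition wq (q n : nat) : nat := (\sum_(i < n.+1) vq q i)%N.

Definition uq (q n : nat) : nat := (\sum_(i < n.+1) wq q i)%N.

Definition has_natural_density (R : realType) (T : nat -> bool) (l : R) : Prop :=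
  ((fun N : nat => ((count T (iota 0 N))%:R / N%:R : R)) @ \oo --> l).

(* Main.v *)
Require Import Defs.
From HB Require Import structures.
From mathcomp Require Import all_boot all_order all_algebra.
From mathcomp Require Import all_classical all_reals all_analysis.
From mathcomp Require Import zify ring lra.
Import Order.TTheory GRing.Theory Num.Theory.
Local Open Scope nat_scope.

Lemma vq_pos_dvd q m : 0 < vq q m -> q %| m.
Proof.
rewrite /vq; case: eqP => // m0.
apply: contraTT => nq; rewrite -leqNgt.
apply/bigmax_leqP => [[k hk]] /= hd.
case: k hk hd => // k _ hd.
case/negP: nq; exact: dvdn_trans (dvdn_exp (ltn0Sn k) (dvdnn q)) hd.
Qed.

Lemma vq_q1 q m : 1 < q -> 0 < m -> ~~ (q %| m) -> vq q (q * m) = 1.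
Proof.
move=> q1 m0 nq; have qm0 : (q * m == 0) = false.
  by apply/negbTE; rewrite -lt0n muln_gt0 m0 andbT ltnW.
rewrite /vq qm0.
apply/eqP; rewrite eqn_leq; apply/andP; split.
  apply/bigmax_leqP => [[k hk]] /= hd.
  case: k hk hd => // [[|k]] // _ hd.
  exfalso; move: nq; apply/negP/negPn.
  have : q ^ 2 %| q * m by rewrite (dvdn_trans _ hd) // dvdn_exp2l.
  by rewrite expnS expn1 dvdn_pmul2l // ltnW.
have h1 : 1 < (q * m).+1 by rewrite ltnS muln_gt0 m0 ltnW.
apply: (@leq_bigmax_cond _ (fun i : 'I_(q * m).+1 => q ^ i %| q * m) (fun i => nat_of_ord i) (Ordinal h1)).
by rewrite /= expn1 dvdn_mulr.
Qed.

Lemma wqS q n : wq q n.+1 = wq q n + vq q n.+1.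
Proof. by rewrite /wq big_ord_recr. Qed.

Lemma uqS q n : uq q n.+1 = uq q n + wq q n.+1.
Proof. by rewrite /uq big_ord_recr. Qed.

Lemma uq_mod q d n : d %| q -> uq q n = n.+1 * wq q n %[mod d].
Proof.
move=> dq; elim: n => [|n IH].
  by rewrite /uq /wq !big_ord_recr !big_ord0 /vq.
rewrite uqS wqS -modnDml IH modnDml.
have hd : d %| n.+1 * vq q n.+1.
  case: (posnP (vq q n.+1)) => [->|/vq_pos_dvd hq]; first by rewrite muln0.
  by rewrite dvdn_mulr // (dvdn_trans dq hq).
case/dvdnP: hd => k hk.
rewrite -wqS.
have -> : n.+2 * wq q n.+1 = k * d + (n.+1 * wq q n + wq q n.+1).
  rewrite mulSn {2}wqS mulnDr hk; lia.
by rewrite modnMDl.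
Qed.

Lemma wq_flat q m j : (forall i, 0 < i <= j -> ~~ (q %| m + i)) -> wq q (m + j) = wq q m.
Proof.
elim: j => [|j IH] h; first by rewrite addn0.
rewrite addnS wqS IH; last by move=> i /andP[i0 ij]; apply: h; rewrite i0 (leq_trans ij).
case: (posnP (vq q (m + j).+1)) => [->|/vq_pos_dvd]; first by rewrite addn0.
by rewrite -addnS (negbTE (h _ _)) // leqnn.
Qed.

Lemma wq_block q c e r : 1 < q -> e < q -> r < q ->
  wq q (c * q ^ 2 + e * q + r) = wq q (c * q ^ 2) + e.
Proof.
move=> q1 eq rq.
have q0 : 0 < q by apply: ltnW.
rewrite wq_flat; last first.
  move=> i /andP[i0 ir]; rewrite dvdn_addr; last first.
    by rewrite dvdn_add // ?dvdn_mull // dvdn_mulr // dvdn_exp.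
  by rewrite gtnNdvd // (leq_ltn_trans ir).
elim: e eq => [|e IH] eq; first by rewrite mul0n !addn0.
have -> : c * q ^ 2 + e.+1 * q = (c * q ^ 2 + e * q + (q - 1)).+1.
  rewrite mulSn; nia.
rewrite wqS wq_flat; last first.
  move=> i /andP[i0 ir]; rewrite dvdn_addr; last first.
    by rewrite dvdn_add // ?dvdn_mull // dvdn_mulr // dvdn_exp.
  by rewrite gtnNdvd // (leq_ltn_trans ir) // ltn_subrL q0.
rewrite IH ?(ltnW eq) //.
have -> : (c * q ^ 2 + e * q + (q - 1)).+1 = q * (c * q + e.+1).
  rewrite mulnDr mulnS; nia.
rewrite vq_q1 //; first by rewrite addn1 addnS.
  by rewrite addnS.
by rewrite dvdn_addr ?dvdn_mull // gtnNdvd.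
Qed.

Lemma sum_shift (F : nat -> nat) a n :
  \sum_(a <= i < a + n) F i = \sum_(0 <= r < n) F (a + r).
Proof.
rewrite -{1}[a]add0n big_addn addKn; apply: eq_bigr => i _; by rewrite addnC.
Qed.

Lemma sum_period1 (F : nat -> nat) d a : (forall i, F (i + d) = F i) ->
  \sum_(a <= i < a + d) F i = \sum_(0 <= i < d) F i.
Proof.
move=> hF; elim: a => [|a IH]; first by rewrite add0n.
have h1 : \sum_(a <= i < (a + d).+1) F i = F a + \sum_(a.+1 <= i < a.+1 + d) F i.
  rewrite big_nat_recl ?leq_addr //.
  by rewrite big_add1.
have h2 : \sum_(a <= i < (a + d).+1) F i = \sum_(a <= i < a + d) F i + F a.
  by rewrite big_nat_recr ?leq_addr //= hF.
by rewrite -IH; apply/eqP; rewrite -(eqn_add2l (F a)) -h1 h2 addnC.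
Qed.

Lemma sum_period (F : nat -> nat) d a k : (forall i, F (i + d) = F i) ->
  \sum_(a <= i < a + k * d) F i = k * \sum_(0 <= i < d) F i.
Proof.
move=> hF; elim: k => [|k IH]; first by rewrite mul0n addn0 big_geq.
rewrite (@big_cat_nat _ _ _ (a + k * d)) ?leq_addr //=; last first.
  by rewrite leq_add2l leq_mul2r leqnSn orbT.
by rewrite IH mulSnr addnA sum_period1 // mulSnr.
Qed.

Lemma sum_blocks (F : nat -> nat) a k m :
  \sum_(a <= n < a + k * m) F n = \sum_(0 <= e < k) \sum_(0 <= r < m) F (a + e * m + r).
Proof.
elim: k => [|k IH]; first by rewrite mul0n addn0 !big_geq.
rewrite (@big_cat_nat _ _ _ (a + k * m)) ?leq_addr //=; last first.
  by rewrite leq_add2l leq_mul2r leqnSn orbT.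
rewrite IH big_nat_recr //=; congr (_ + _).
by rewrite mulSn [m + _]addnC addnA sum_shift.
Qed.

Lemma sum_eqt n t0 : \sum_(0 <= t < n) (t == t0) = (t0 < n).
Proof.
elim: n => [|n IH]; first by rewrite big_geq.
rewrite big_nat_recr //= IH ltnS.
by case: (ltngtP t0 n).
Qed.

Definition Gf (d y s t : nat) : nat := ((s * t + y) %% d == 0).
Definition Sf (d y : nat) : nat := \sum_(0 <= s < d) \sum_(0 <= t < d) Gf d y s t.

Lemma Gf_perl d y s t : Gf d y (s + d) t = Gf d y s t.
Proof. by rewrite /Gf mulnDl [_ + d * t]addnC -addnA [d * t]mulnC modnMDl. Qed.

Lemma Gf_perr d y s t : Gf d y s (t + d) = Gf d y s t.
Proof. by rewrite /Gf mulnDr [_ + s * d]addnC -addnA modnMDl. Qed.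

Lemma term_eq q d y c e r : 1 < q -> d %| q -> e < q -> r < q ->
  nat_of_bool ((uq q (c * q ^ 2 + e * q + r) + y) %% d == 0) =
  Gf d y r.+1 (wq q (c * q ^ 2) + e).
Proof.
move=> q1 dq eq rq.
rewrite -modnDml uq_mod // modnDml wq_block // /Gf.
have : d %| c * q ^ 2 + e * q.
  by rewrite dvdn_add // dvdn_mull // (dvdn_trans dq) // dvdn_exp.
case/dvdnP => k hk.
by rewrite -addnS mulnDl hk mulnAC -addnA modnMDl.
Qed.

Lemma block_count q d y c : 1 < q -> 0 < d -> d %| q ->
  \sum_(c * q ^ 2 <= n < c * q ^ 2 + q ^ 2) ((uq q n + y) %% d == 0)
  = (q %/ d) ^ 2 * Sf d y.
Proof.
move=> q1 d0 dq.
rewrite -{3}(mulnn q) sum_blocks.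
set W := wq q (c * q ^ 2).
rewrite (@eq_big_nat _ _ _ _ _ _ (fun e => \sum_(1 <= i < 1 + (q %/ d) * d) Gf d y i (W + e))); last first.
  move=> e /andP[_ eq]; rewrite divnK // sum_shift.
  by apply: eq_big_nat => r /andP[_ rq]; rewrite term_eq.
rewrite (eq_bigr (fun e => (q %/ d) * \sum_(0 <= i < d) Gf d y i (W + e))); last first.
  by move=> e _; rewrite sum_period // => i; exact: Gf_perl.
rewrite -big_distrr /= exchange_big_nat /=.
rewrite /Sf expnS expn1 -mulnA; congr (_ * _).
rewrite big_distrr; apply: eq_bigr => s _ /=.
rewrite -(sum_period _ _ W); last by move=> i; rewrite Gf_perr.
by rewrite divnK // sum_shift.
Qed.

Lemma unique_sol d s y : 0 < d -> coprime s d ->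
  exists2 t0, t0 < d & forall t, t < d -> (d %| s * t + y) = (t == t0).
Proof.
move=> d0 cop.
case: (egcdnP s d0) => km kn hk _.
have g1 : gcdn d s = 1 by apply/eqP; rewrite -/(coprime d s) coprime_sym.
rewrite g1 in hk.
set t0 := (kn * y) %% d.
have sol : d %| s * t0 + y.
  have e : s * t0 + y + s * (kn * y %/ d) * d = y * km * d.
    have dv := divn_eq (kn * y) d; rewrite -/t0 in dv.
    move: (kn * y %/ d) dv => Q dv.
    nia.
  by rewrite -(dvdn_addl (s * t0 + y) (dvdn_mull (s * (kn * y %/ d)) (dvdnn d))) e dvdn_mull.
have uniq2 : forall a b, a <= b -> b < d -> d %| s * a + y -> d %| s * b + y -> a = b.
  move=> a b ab bd ha hb.
  have : d %| (s * b + y) - (s * a + y) by apply: dvdn_sub.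
  rewrite subnDr -mulnBr Gauss_dvdr; last by rewrite /coprime g1.
  case: (posnP (b - a)) => [/eqP|pos]; first by rewrite subn_eq0 => ba _; apply/eqP; rewrite eqn_leq ab.
  move/(dvdn_leq pos) => db; exfalso.
  have : b - a < d by rewrite (leq_ltn_trans (leq_subr _ _)).
  by rewrite ltnNge db.
exists t0; first by rewrite ltn_pmod.
move=> t td; apply/idP/eqP => [ht|->//].
case: (leqP t t0) => h.
  by apply: uniq2 => //; rewrite ltn_pmod.
by apply/esym/uniq2 => //; apply: ltnW.
Qed.

Lemma inner_count d y s : 0 < d ->
  \sum_(0 <= t < d) Gf d y s t = (gcdn s d %| y) * gcdn s d.
Proof.
move=> d0.
set h := gcdn s d.
have h0 : 0 < h by rewrite gcdn_gt0 d0 orbT.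
have hd : h %| d by apply: dvdn_gcdr.
have hs : h %| s by apply: dvdn_gcdl.
case hy: (h %| y); last first.
  rewrite mul0n big1_seq // => t _; apply/eqP; rewrite eqb0; apply/negP => /eqP ht.
  have : h %| s * t + y by apply: (dvdn_trans hd); apply/eqP.
  by rewrite dvdn_addr ?hy // dvdn_mulr.
rewrite mul1n.
set d' := d %/ h. set s' := s %/ h. set y' := y %/ h.
have ed : d = h * d' by rewrite /d' mulnC divnK.
have es : s = h * s' by rewrite /s' mulnC divnK.
have ey : y = h * y' by rewrite /y' mulnC divnK.
have d'0 : 0 < d' by rewrite /d' divn_gt0 // dvdn_leq.
have cop : coprime s' d'.
  rewrite /coprime -(eqn_pmul2l h0) muln1 muln_gcdr -es -ed.
  by [].
have -> : \sum_(0 <= t < d) Gf d y s t = \sum_(0 <= t < 0 + h * d') (d' %| s' * t + y').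
  rewrite add0n -ed; apply: eq_bigr => t _.
  by rewrite /Gf -/(dvdn d _) {1}ed es ey -mulnA -mulnDr dvdn_pmul2l.
rewrite sum_period; last first.
  by move=> i; rewrite mulnDr -addnA [s' * d' + _]addnC addnA dvdn_addl // dvdn_mull.
case: (@unique_sol d' s' y' d'0 cop) => t0 t0d ht0.
rewrite (@eq_big_nat _ _ _ _ _ _ (fun t => nat_of_bool (t == t0))); last first.
  by move=> t /andP[_ /ht0] ->.
by rewrite sum_eqt t0d muln1.
Qed.

Lemma count_gcd d f : 0 < d -> f %| d ->
  \sum_(0 <= s < d) (gcdn s d == f) = totient (d %/ f).
Proof.
move=> d0 fd.
have f0 : 0 < f by apply: (dvdn_gt0 d0 fd) || (case: f fd => //; rewrite dvd0n => /eqP d00; rewrite d00 in d0).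
case: f f0 fd => // f' _ fd.
set e := d %/ f'.+1.
have ed : d = 0 + e * f'.+1 by rewrite add0n divnK.
rewrite {1 2}ed sum_blocks totient_count_coprime.
apply: eq_bigr => j _.
rewrite big_nat_recl //= big1_seq ?addn0; last first.
  move=> r /andP[_]; rewrite mem_index_iota => /andP[_ rf].
  apply/eqP; rewrite eqb0; apply/negP => /eqP hg.
  have := dvdn_gcdl (0 + j * f'.+1 + r.+1) (0 + e * f'.+1); rewrite hg add0n.
  by rewrite dvdn_addr ?dvdn_mull // gtnNdvd.
rewrite !add0n -muln_gcdl -{2}(mul1n f'.+1) eqn_pmul2r //.
by rewrite coprime_sym /coprime.
Qed.

Lemma sum_gcd (H : nat -> nat) d : 0 < d ->
  \sum_(0 <= s < d) H (gcdn s d) = \sum_(f <- divisors d) H f * totient (d %/ f).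
Proof.
move=> d0.
transitivity (\sum_(0 <= s < d) \sum_(f <- divisors d) (gcdn s d == f) * H f).
  apply: eq_bigr => s _.
  rewrite (bigD1_seq (gcdn s d)) ?divisors_uniq //=; last by rewrite -dvdn_divisors // dvdn_gcdr.
  rewrite eqxx mul1n big1 ?addn0 // => f hf.
  by rewrite eq_sym (negbTE hf).
rewrite exchange_big /=; apply: eq_big_seq => f hf.
rewrite -big_distrl /= count_gcd //; first by rewrite mulnC.
by rewrite dvdn_divisors.
Qed.

Lemma Sf_eq d y : 0 < d ->
  Sf d y = \sum_(f <- divisors (gcdn y d)) f * totient (d %/ f).
Proof.
move=> d0.
rewrite /Sf (eq_bigr (fun s => (gcdn s d %| y) * gcdn s d)); last first.
  by move=> s _; rewrite inner_count.
rewrite (sum_gcd (fun g => (g %| y) * g)) //.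
have g0 : 0 < gcdn y d by rewrite gcdn_gt0 d0 orbT.
rewrite (eq_bigr (fun f => if f %| y then f * totient (d %/ f) else 0)); last first.
  by move=> f _; case: (f %| y); rewrite ?mul1n ?mul0n.
rewrite -big_mkcond -big_filter /=.
apply: perm_big; apply: uniq_perm; rewrite ?filter_uniq ?divisors_uniq // => f.
by rewrite mem_filter -!dvdn_divisors // dvdn_gcd andbC.
Qed.

Lemma count_sum (P : nat -> bool) N : count P (iota 0 N) = \sum_(0 <= n < N) P n.
Proof.
rewrite -sum1_count big_mkcond /index_iota subn0; apply: eq_bigr => i _.
by case: (P i).
Qed.

Lemma cnt_bounds (P : nat -> bool) M C N : (0 < M)%N ->
  (forall c, \sum_(c * M <= n < c * M + M) P n = C) ->
  (N %/ M * C <= count P (iota 0 N) <= N %/ M * C + C)%N.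
Proof.
move=> M0 hb.
have hc : forall c, \sum_(0 <= n < c * M) P n = c * C.
  elim=> [|c IH]; first by rewrite mul0n big_geq.
  rewrite mulSnr (@big_cat_nat _ _ _ (c * M)) //= ?leq_addr // IH hb.
  by rewrite mulSnr.
set c := N %/ M.
have le1 : (c * M <= N)%N by rewrite leq_divM.
have le2 : (N <= c * M + M)%N by rewrite ltnW // -mulSnr ltn_ceil.
rewrite count_sum (@big_cat_nat _ _ _ (c * M)) //= hc leq_addr /=.
by rewrite leq_add2l -(hb c) (@big_cat_nat _ _ _ N _ (c * M + M)) //= leq_addr.
Qed.

Local Open Scope ring_scope.

Lemma density_block (R : realType) (P : nat -> bool) (M C : nat) : (0 < M)%N ->
  (forall c, (\sum_(c * M <= n < c * M + M) P n)%N = C) ->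
  has_natural_density P (C%:R / M%:R : R).
Proof.
move=> M0 hb.
have key : forall N, (0 < N)%N ->
    `|C%:R / M%:R - (count P (iota 0 N))%:R / N%:R| <= C%:R / N%:R :> R.
  move=> N N0.
  have /andP[b1 b2] := @cnt_bounds P M C N M0 hb.
  set a := count P (iota 0 N) in b1 b2 *.
  set c := (N %/ M)%N in b1 b2.
  have le1 : (c * M <= N)%N by rewrite leq_divM.
  have le2 : (N <= c * M + M)%N by rewrite ltnW // -mulSnr ltn_ceil.
  have h1 : (a * M <= C * N + C * M)%N by nia.
  have h2 : (C * N <= a * M + C * M)%N by nia.
  have Mr : (M%:R : R) != 0 by rewrite pnatr_eq0 -lt0n.
  have Nr : (N%:R : R) != 0 by rewrite pnatr_eq0 -lt0n.
  have -> : C%:R / M%:R - a%:R / N%:R = ((C * N)%:R - (a * M)%:R) / (M * N)%:R :> R.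
    by rewrite !natrM; field; rewrite Mr Nr.
  rewrite normrM normfV normr_nat.
  rewrite ler_pdivrMr ?ltr0n ?muln_gt0 ?M0 ?N0 //.
  have -> : C%:R / N%:R * (M * N)%:R = (C * M)%:R :> R.
    by rewrite !natrM; field; rewrite Nr.
  have h1r : (a * M)%:R <= (C * N)%:R + (C * M)%:R :> R by rewrite -natrD ler_nat.
  have h2r : (C * N)%:R <= (a * M)%:R + (C * M)%:R :> R by rewrite -natrD ler_nat.
  rewrite ler_norml; apply/andP; split; lra.
apply/cvgrPdist_le => e e0.
near=> N.
have N0 : (0 < N)%N by near: N; exact: nbhs_infty_gt.
have NC : C%:R / e <= N%:R :> R by near: N; exact: nbhs_infty_ger.
apply: (le_trans (key N N0)).
rewrite ler_pdivrMr ?ltr0n // mulrC -ler_pdivrMr //.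
Unshelve. all: by end_near. Qed.

Theorem theorem4p2 (R : realType) (d q : nat) (x : int) :
  (2 <= d)%N -> (2 <= q)%N -> (d %| q)%N ->
  has_natural_density (fun n : nat => (d%:Z %| (uq q n)%:Z + x)%Z)
    ((d ^ 2)%:R^-1 *
       \sum_(f <- divisors `|gcdz x d%:Z|%N) ((f * totient (d %/ f))%N%:R : R)).
Proof.
move=> d2 q2 dq.
have d0 : (0 < d)%N by apply: ltnW.
have q1 : (1 < q)%N by [].
have dz : d%:Z != 0 by rewrite eqz_nat -lt0n.
set y := `|(x %% d%:Z)%Z|%N.
have ey : (x %% d%:Z)%Z = y%:Z by rewrite /y gez0_abs // modz_ge0.
have -> : (fun n : nat => (d%:Z %| (uq q n)%:Z + x)%Z) =
          (fun n : nat => ((uq q n + y) %% d == 0)%N).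
  apply: funext => n.
  apply/idP/idP.
  - move/dvdz_mod0P => h.
    have : ((uq q n + y)%N %% d%:Z)%Z = 0.
      by rewrite PoszD -ey modzDmr h.
    by move/dvdz_mod0P; rewrite dvdzE !absz_nat.
  - move=> h; apply/dvdz_mod0P; rewrite -modzDmr ey -PoszD.
    by apply/dvdz_mod0P; rewrite dvdzE !absz_nat.
have eg : `|gcdz x d%:Z|%N = gcdn y d.
  by rewrite -gcdz_modl ey /gcdz !absz_nat.
rewrite eg -natr_sum -Sf_eq //.
have -> : (d ^ 2)%:R^-1 * (Sf d y)%:R = ((q %/ d) ^ 2 * Sf d y)%:R / (q ^ 2)%:R :> R.
  have kq : q = (q %/ d * d)%N by rewrite divnK.
  have k0 : (0 < q %/ d)%N by rewrite divn_gt0 // dvdn_leq // ltnW.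
  have kr : ((q %/ d)%:R : R) != 0 by rewrite pnatr_eq0 -lt0n.
  have dr : (d%:R : R) != 0 by rewrite pnatr_eq0 -lt0n.
  rewrite {2}kq !natrX natrM natrX natrM exprMn; field.
  by apply/andP; split; [exact: dr | exact: kr].
apply: density_block; first by rewrite expn_gt0 ltnW.
by move=> c; apply: block_count.
Qed.
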